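(* Let $F$ be a field, $V$ a nonzero vector space over $F$, $\Gamma$ a nonempty set, $\varphi:\Gamma\to\Gamma$ a map and $\mathfrak{w}=(\mathfrak{w}_\alpha)_{\alpha\in\Gamma}\in F^\Gamma$. Let $\sigma_{\varphi,\mathfrak{w}}:V^\Gamma\to V^\Gamma$, $(x_\alpha)_{\alpha\in\Gamma}\mapsto(\mathfrak{w}_\alpha x_{\varphi(\alpha)})_{\alpha\in\Gamma}$. Put \[\mathsf{M}:=\Big\{r\in F\setminus\{0\}: \exists\theta\in P(\varphi)\setminus\downarrow\mathfrak{Z}\ \ \prod_{0\leq i<per(\theta)} \mathfrak{w}_{\varphi^{i}(\theta)}=r^{per(\theta)}\Big\}.\] Then \[{\rm Eigen}(\sigma_{\varphi,\mathfrak{w}},V^\Gamma)=\begin{cases} F\setminus\{0\}, & W(\varphi)\not\subseteq \downarrow\mathfrak{Z},\ \Gamma=\varphi(\Gamma\setminus\mathfrak{Z}),\\ F, & W(\varphi)\not\subseteq\downarrow\mathfrak{Z},\ \Gamma\neq\varphi(\Gamma\setminus\mathfrak{Z}),\\ \mathsf{M}, & W(\varphi)\subseteq \downarrow\mathfrak{Z},\ \Gamma=\varphi(\Gamma\setminus\mathfrak{Z}),\\ \mathsf{M}\cup\{0\}, & W(\varphi)\subseteq\downarrow\mathfrak{Z},\ \Gamma\neq\varphi(\Gamma\setminus\mathfrak{Z}). \end{cases}\]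
   Context: For a linear map $T:W\to W$ on an $F$-vector space $W$, ${\rm Eigen}(T,W)$ is the set of all $r\in F$ such that $T(x)=rx$ for some nonzero $x\in W$. $\mathfrak{Z}:=\{\alpha\in\Gamma:\mathfrak{w}_\alpha=0\}$ and $\downarrow\mathfrak{Z}:=\bigcup_{n\geq0}\varphi^{-n}(\mathfrak{Z})$ (with $\varphi^0$ the identity). A point $a\in\Gamma$ is wandering if the sequence $(\varphi^n(a))_{n\geq1}$ is one-to-one; $W(\varphi)$ is the set of wandering points. $a$ is periodic if $\varphi^n(a)=a$ for some $n\geq1$; $P(\varphi)$ is the set of periodic points, and for $\alpha\in P(\varphi)$, $per(\alpha)=\min\{n\geq1:\varphi^n(\alpha)=\alpha\}$. *)

(* Defs.v *)
From HB Require Import structures.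
From mathcomp Require Import all_boot all_order all_algebra.
From mathcomp Require Import boolp classical_sets functions.
Set Implicit Arguments. Unset Strict Implicit. Unset Printing Implicit Defensive.
Import Order.TTheory GRing.Theory Num.Theory.
Local Open Scope ring_scope.
Local Open Scope classical_set_scope.

Definition Eigen (F : fieldType) (W : lmodType F) (T : W -> W) : set F :=
  [set r | exists x : W, x <> 0 /\ T x = r *: x].

Definition sigma_op (F : fieldType) (V : lmodType F) (Gamma : Type)
  (phi : Gamma -> Gamma) (w : Gamma -> F) : (Gamma -> V) -> (Gamma -> V) :=
  fun x a => w a *: x (phi a).

Definition Zset (F : fieldType) (Gamma : Type) (w : Gamma -> F) : set Gamma :=
  [set a | w a = 0].

Definition downZ (F : fieldType) (Gamma : Type) (phi : Gamma -> Gamma)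
  (w : Gamma -> F) : set Gamma :=
  [set a | exists n : nat, Zset w (iter n phi a)].

Definition wandering (Gamma : Type) (phi : Gamma -> Gamma) : set Gamma :=
  [set a | forall m n : nat, (1 <= m)%N -> (1 <= n)%N ->
     iter m phi a = iter n phi a -> m = n].

Definition periodic (Gamma : Type) (phi : Gamma -> Gamma) : set Gamma :=
  [set a | exists n : nat, (1 <= n)%N /\ iter n phi a = a].

Definition is_per (Gamma : Type) (phi : Gamma -> Gamma) (a : Gamma) (n : nat) : Prop :=
  [/\ (1 <= n)%N, iter n phi a = a &
      forall m : nat, (1 <= m)%N -> iter m phi a = a -> (n <= m)%N].

Definition Mset (F : fieldType) (Gamma : Type) (phi : Gamma -> Gamma)
  (w : Gamma -> F) : set F :=
  [set r | r != 0 /\ exists theta : Gamma, exists p : nat,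
     periodic phi theta /\ ~ downZ phi w theta /\ is_per phi theta p /\
     \prod_(i < p) w (iter i phi theta) = r ^+ p].

Definition surj_off_Z (F : fieldType) (Gamma : Type) (phi : Gamma -> Gamma)
  (w : Gamma -> F) : Prop :=
  [set: Gamma] = phi @` (~` Zset w).

(* Main.v *)
Require Import Defs.
From HB Require Import structures.
From mathcomp Require Import all_boot all_order all_algebra.
From mathcomp Require Import boolp classical_sets functions.
From mathcomp Require Import ring zify.
Import Order.TTheory GRing.Theory Num.Theory.
Local Open Scope ring_scope.
Local Open Scope classical_set_scope.
Set Implicit Arguments. Unset Strict Implicit.

Lemma prodS (F : fieldType) (Gamma : Type) (phi : Gamma -> Gamma) (w : Gamma -> F) n b :
  \prod_(i < n.+1) w (iter i phi b) = (\prod_(i < n) w (iter i phi b)) * w (iter n phi b).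
Proof. by rewrite big_ord_recr. Qed.

Lemma prodSl (F : fieldType) (Gamma : Type) (phi : Gamma -> Gamma) (w : Gamma -> F) n b :
  \prod_(i < n.+1) w (iter i phi b) = w b * \prod_(i < n) w (iter i phi (phi b)).
Proof. by rewrite big_ord_recl; congr (_ * _); apply: eq_bigr => i _; rewrite /= -iterSr. Qed.

Lemma prodD (F : fieldType) (Gamma : Type) (phi : Gamma -> Gamma) (w : Gamma -> F) p m b :
  \prod_(i < p + m) w (iter i phi b) =
  (\prod_(i < p) w (iter i phi b)) * \prod_(i < m) w (iter i phi (iter p phi b)).
Proof. by rewrite big_split_ord; congr (_ * _); apply: eq_bigr => i _; rewrite /= addnC iterD. Qed.

Lemma construct (F : fieldType) (V : lmodType F) (Gamma : Type)
  (phi : Gamma -> Gamma) (w : Gamma -> F) (v : V) (hv : v != 0) (r : F) (hr : r != 0)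
  (a : Gamma) (c : nat -> F) (c0 : c 0%N = 1)
  (rec : forall m, r * c m = w (iter m phi a) * c m.+1)
  (cons : forall m m', iter m phi a = iter m' phi a -> c m = c m') :
  Eigen (@sigma_op F V Gamma phi w) r.
Proof.
pose val b k m := r^-1 ^+ k * (\prod_(i < k) w (iter i phi b)) * c m.
have shift b k m : iter k phi b = iter m phi a -> val b k.+1 m.+1 = val b k m.
  move=> H; rewrite /val prodS exprS H.
  transitivity (r^-1 ^+ k * (\prod_(i < k) w (iter i phi b)) * (r^-1 * (w (iter m phi a) * c m.+1))).
    by ring.
  by rewrite -rec mulKf.
have shiftn b k m d : iter k phi b = iter m phi a -> val b (k + d)%N (m + d)%N = val b k m.
  move=> H; elim: d => [|d IH]; first by rewrite !addn0.
  rewrite !addnS shift ?IH //.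
  by rewrite addnC iterD H -iterD addnC.
have consv b k m k' m' : iter k phi b = iter m phi a -> iter k' phi b = iter m' phi a ->
    val b k m = val b k' m'.
  wlog le : k m k' m' / (k <= k')%N.
    move=> W H H'; case: (leqP k k') => l; first exact: W.
    by symmetry; apply: W => //; apply: ltnW.
  move=> H H'; rewrite -(subnKC le) in H' *.
  have e : c m' = c (m + (k' - k))%N.
    by apply: cons; rewrite -H' addnC iterD H -iterD addnC.
  by rewrite -(shiftn b k m (k' - k)%N H) /val e.
pose wit b := exists km : nat * nat, iter km.1 phi b = iter km.2 phi a.
pose f b : V := match pselect (wit b) with
  | left H => val b (projT1 (cid H)).1 (projT1 (cid H)).2 *: v | right _ => 0 end.
have fE b k m : iter k phi b = iter m phi a -> f b = val b k m *: v.
  move=> H; rewrite /f; case: pselect => [H1|nH]; last by exfalso; apply: nH; exists (k, m).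
  by case: cid => -[k0 m0] /= H0; rewrite (consv _ _ _ _ _ H0 H).
have fN b : ~ wit b -> f b = 0.
  by move=> nH; rewrite /f; case: pselect.
exists f; split.
  move=> e; have := congr1 (fun g => g a) e; rewrite (fE a 0%N 0%N) //= /val.
  rewrite expr0 big_ord0 c0 !mul1r scale1r => ev; by move/eqP: hv.
apply: funext => b; rewrite /sigma_op scalrfctE.
case: (pselect (wit b)) => [[[k m] /= H]|nH].
  have H' : iter k phi (phi b) = iter m.+1 phi a by rewrite -iterSr iterS H.
  rewrite (fE _ _ _ H) (fE _ _ _ H') !scalerA; congr (_ *: v).
  rewrite -(shift _ _ _ H) /val prodSl exprS.
  transitivity ((r * r^-1) * (r^-1 ^+ k * (w b * \prod_(i < k) w (iter i phi (phi b))) * c m.+1)).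
    by rewrite mulfV // mul1r; ring.
  by ring.
rewrite (fN _ nH) fN ?scaler0 //.
by move=> [[k m] /= H]; apply: nH; exists (k.+1, m); rewrite -H; exact: iterSr.
Qed.

Lemma Pnz (F : fieldType) (Gamma : Type) (phi : Gamma -> Gamma) (w : Gamma -> F) a m :
  ~ downZ phi w a -> \prod_(i < m) w (iter i phi a) != 0.
Proof.
move=> nd; apply/prodf_neq0 => i _; apply/eqP => e; apply: nd; by exists i.
Qed.

Lemma wnz (F : fieldType) (Gamma : Type) (phi : Gamma -> Gamma) (w : Gamma -> F) a m :
  ~ downZ phi w a -> w (iter m phi a) != 0.
Proof. by move=> nd; apply/eqP => e; apply: nd; exists m. Qed.

Lemma crec (F : fieldType) (Gamma : Type) (phi : Gamma -> Gamma) (w : Gamma -> F) a (r : F) :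
  ~ downZ phi w a -> forall m,
  r * (r ^+ m / \prod_(i < m) w (iter i phi a)) =
  w (iter m phi a) * (r ^+ m.+1 / \prod_(i < m.+1) w (iter i phi a)).
Proof.
move=> nd m; rewrite prodS exprS invfM.
have h1 := Pnz m nd; have h2 := wnz m nd.
by field; rewrite ?h1 ?h2.
Qed.

Lemma wand_case (F : fieldType) (V : lmodType F) (Gamma : Type)
  (phi : Gamma -> Gamma) (w : Gamma -> F) (v : V) (hv : v != 0) (r : F) (hr : r != 0) a :
  wandering phi a -> ~ downZ phi w a -> Eigen (@sigma_op F V Gamma phi w) r.
Proof.
move=> wa nd.
apply: (@construct F V Gamma phi w v hv r hr a (fun m => r ^+ m / \prod_(i < m) w (iter i phi a))).
- by rewrite expr0 big_ord0 invr1 mulr1.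
- exact: crec.
- move=> m m' e; have : m.+1 = m'.+1 by apply: wa => //; rewrite !iterS e.
  by case=> ->.
Qed.

Lemma per_case (F : fieldType) (V : lmodType F) (Gamma : Type)
  (phi : Gamma -> Gamma) (w : Gamma -> F) (v : V) (hv : v != 0) (r : F) :
  Mset phi w r -> Eigen (@sigma_op F V Gamma phi w) r.
Proof.
move=> [hr [th [p [_ [nd [[p1 pp pmin] hprod]]]]]].
pose c m := r ^+ m / \prod_(i < m) w (iter i phi th).
have c1 m : c (p + m)%N = c m.
  rewrite /c prodD pp hprod exprD invfM.
  have h1 := Pnz m nd; have h2 : r ^+ p != 0 by rewrite expf_neq0.
  by field; rewrite ?h1 ?h2.
have c2 q u : c (q * p + u)%N = c u.
  elim: q => [|q IH]; first by rewrite mul0n add0n.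
  by rewrite mulSn -addnA c1 IH.
have i2 q u : iter (q * p + u)%N phi th = iter u phi th.
  elim: q => [|q IH]; first by rewrite mul0n add0n.
  by rewrite mulSn -addnA addnC iterD pp IH.
have uniq u u' : (u < p)%N -> (u' < p)%N -> iter u phi th = iter u' phi th -> u = u'.
  wlog le : u u' / (u <= u')%N.
    move=> W h h' e; case: (leqP u u') => l; first exact: W.
    by symmetry; apply: W => //; apply: ltnW.
  move=> h h' e; case: (ltngtP u u') => // l.
  have : iter (p - u' + u)%N phi th = th.
    rewrite iterD e -iterD; have -> : (p - u' + u')%N = p by lia.
    exact: pp.
  move=> it; have := pmin (p - u' + u)%N; rewrite it.
  have h0 : (0 < p - u' + u)%N by lia.
  move=> /(_ h0 erefl); lia.
  lia.
apply: (@construct F V Gamma phi w v hv r hr th c).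
- by rewrite /c expr0 big_ord0 invr1 mulr1.
- exact: crec.
- move=> m m' e.
  rewrite (divn_eq m p) (divn_eq m' p) !c2; apply: congr1; apply: uniq; rewrite ?ltn_pmod //.
  by rewrite -(i2 (m %/ p)%N (m %% p)%N) -(i2 (m' %/ p)%N (m' %% p)%N) -!divn_eq.
Qed.

Lemma converse (F : fieldType) (V : lmodType F) (Gamma : Type)
  (phi : Gamma -> Gamma) (w : Gamma -> F) (r : F) (hr : r != 0) :
  Eigen (@sigma_op F V Gamma phi w) r ->
  (exists a, wandering phi a /\ ~ downZ phi w a) \/ Mset phi w r.
Proof.
move=> [x [xn ex]].
have Hx b : w b *: x (phi b) = r *: x b.
  by have := congr1 (fun g => g b) ex; rewrite /sigma_op scalrfctE.
have [a xa] : exists a, x a != 0.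
  apply: contrapT => nh; apply: xn; apply: funext => a.
  by apply/eqP; apply: contrapT => h; apply: nh; exists a; apply/negP.
have it n b : r ^+ n *: x b = (\prod_(i < n) w (iter i phi b)) *: x (iter n phi b).
  elim: n => [|n IH]; first by rewrite expr0 big_ord0 !scale1r.
  by rewrite exprS -scalerA IH scalerA mulrC -scalerA -Hx scalerA prodS iterS.
have prop b : x b != 0 -> w b != 0 /\ x (phi b) != 0.
  move=> xb; have : r *: x b != 0 by rewrite scaler_eq0 negb_or hr xb.
  rewrite -Hx scaler_eq0 negb_or => /andP[]; done.
have allx n : x (iter n phi a) != 0.
  by elim: n => [|n IH] //=; have [] := prop _ IH.
have nd : ~ downZ phi w a.
  move=> [n /= hz]; have [] := prop _ (allx n); by rewrite hz eqxx.
case: (pselect (wandering phi a)) => wa; first by left; exists a.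
right.
have [m [n [m1 [mn e]]]] : exists m n, (1 <= m)%N /\ (m < n)%N /\ iter m phi a = iter n phi a.
  apply: contrapT => no; apply: wa => m n h1 h2 e.
  case: (ltngtP m n) => // l; exfalso; apply: no.
  - by exists m, n.
  - by exists n, m; split => //; split.
pose th := iter m phi a.
have thd : iter (n - m)%N phi th = th by rewrite /th -iterD subnK // ltnW.
have exP : exists k, `[< (1 <= k)%N /\ iter k phi th = th >].
  by exists (n - m)%N; apply/asboolP; split => //; rewrite subn_gt0.
case: (ex_minnP exP) => p /asboolP [p1 pp] pmin.
have ndth : ~ downZ phi w th.
  move=> [k /= hz]; apply: nd; exists (k + m)%N; by rewrite /Zset iterD.
have xth : x th != 0 by exact: allx.
split; first exact: hr.
exists th, p; split; first by exists p.
split; first exact: ndth.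
split.
  split => // k k1 kk; apply: pmin; exact/asboolP.
have := it p th; rewrite pp => /eqP; rewrite -subr_eq0 -scalerBl scaler_eq0 (negbTE xth) orbF subr_eq0.
by move/eqP.
Qed.

Lemma zero_case (F : fieldType) (V : lmodType F) (Gamma : Type)
  (phi : Gamma -> Gamma) (w : Gamma -> F) (v : V) (hv : v != 0) :
  Eigen (@sigma_op F V Gamma phi w) 0 <-> ~ surj_off_Z phi w.
Proof.
split.
  move=> [x [xn ex]] su; apply: xn; apply: funext => b.
  have : [set: Gamma] b by [].
  rewrite su => -[a /= ha <-].
  have := congr1 (fun g => g a) ex; rewrite /sigma_op scalrfctE scale0r => /eqP.
  rewrite scaler_eq0 => /orP[/eqP//|/eqP //].
move=> ns.
have [be nb] : exists be, ~ (phi @` (~` Zset w)) be.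
  apply: contrapT => no; apply: ns; apply/seteqP; split => // b _.
  by apply: contrapT => h; apply: no; exists b.
pose x : Gamma -> V := fun b => if pselect (b = be) then v else 0.
exists x; split.
  move=> e; have := congr1 (fun g => g be) e; rewrite /x; case: pselect => // Hb ev.
  by move: ev => /= ev; rewrite ev eqxx in hv.
apply: funext => b; rewrite /sigma_op; transitivity (0 : V); last by symmetry; exact: (scale0r (x b)).
rewrite /x /=; case: (pselect (phi b = be)) => [pb|nb2] /=; last by rewrite scaler0.
have -> : w b = 0.
  by apply: contrapT => h; apply: nb; exists b.
by rewrite scale0r.
Qed.

Unset Implicit Arguments. Set Strict Implicit.

Theorem theorem2p9 (F : fieldType) (V : lmodType F) (Gamma : Type)
  (phi : Gamma -> Gamma) (w : Gamma -> F)
  (hV : exists v : V, v != 0) (hGamma : inhabited Gamma) :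
  let E := Eigen (@sigma_op F V Gamma phi w) in
  [/\ (~ (wandering phi `<=` downZ phi w) -> surj_off_Z phi w ->
         E = [set r | r != 0]),
      (~ (wandering phi `<=` downZ phi w) -> ~ surj_off_Z phi w ->
         E = [set: F]),
      (wandering phi `<=` downZ phi w -> surj_off_Z phi w ->
         E = Mset phi w) &
      (wandering phi `<=` downZ phi w -> ~ surj_off_Z phi w ->
         E = Mset phi w `|` [set 0])].
Proof.
move=> E; have [v hv] := hV.
have Z0 := zero_case phi w hv.
have getw : ~ (wandering phi `<=` downZ phi w) -> exists a, wandering phi a /\ ~ downZ phi w a.
  move=> ns; apply: contrapT => no; apply: ns => a wa.
  by apply: contrapT => nd; apply: no; exists a.
split.
- move=> ns su; have [a [wa nd]] := getw ns.
  apply: funext => r; apply: propext; split => /=.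
    by move=> er; apply/eqP => r0; subst r; exact: (proj1 Z0 er su).
  by move=> hr; apply: (wand_case hv hr wa nd).
- move=> ns su; have [a [wa nd]] := getw ns.
  apply: funext => r; apply: propext; split => // _.
  have [->|hr] := eqVneq r 0; first exact: (proj2 Z0).
  exact: (wand_case hv hr wa nd).
- move=> sub su.
  apply: funext => r; apply: propext; split; last exact: (per_case hv).
  move=> er; have hr : r != 0.
    by apply/eqP => r0; subst r; exact: (proj1 Z0 er su).
  case: (converse hr er) => // -[a [wa nd]].
  by exfalso; apply: nd; apply: sub.
- move=> sub su.
  apply: funext => r; apply: propext; split; last first.
    by case=> [hm|->]; [exact: (per_case hv) | exact: (proj2 Z0)].
  move=> er; have [->|hr] := eqVneq r 0; first by right.
  left; case: (converse hr er) => // -[a [wa nd]].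
  by exfalso; apply: nd; apply: sub.
Qed.
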